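(* Let $S=\langle P,\varphi\rangle$ be a SUT model, $t$ a strength and $N\ge 1$ an integer. The propositional formula $Sat_{CCX}^{N,t,S}=X\wedge CCX\wedge SUTX$ (defined in the context) is satisfiable if and only if a covering array $CA(N;t,S)$ exists.
   Context: A SUT model is $S=\langle P,\varphi\rangle$, where $P$ is a finite set of parameters, each $p\in P$ having a finite nonempty domain $d(p)$, and $\varphi$ is a propositional formula whose atoms have the form $(p=v)$ with $p\in P$, $v\in d(p)$. A test case is a full assignment $A$ giving each $p\in P$ a value in $d(p)$ such that $\varphi$ evaluates to true when each atom $(p=v)$ is read as true iff $A(p)=v$; it is assumed that at least one test case exists. Fix a strength $t$ with $1\le t\le |P|$. A $t$-tuple is an assignment of values (from their domains) to exactly $t$ distinct parameters, viewed as a set of pairs $(p,v)$. A test case covers a $t$-tuple $\tau$ if it assigns $v$ to $p$ for every $(p,v)\in\tau$. A $t$-tuple is allowed if some test case covers it; $\mathcal{T}_a$ denotes the set of allowed $t$-tuples. A covering array $CA(N;t,S)$ is a list of $N$ test cases (repetitions allowed) such that every allowed $t$-tuple is covered by at least one of them. Write $[N]=\{1,\dots,N\}$. Propositional variables: $x_{i,p,v}$ for $i\in[N]$, $p\in P$, $v\in d(p)$, and $c^i_\tau$ for $i\in\{0,1,\dots,N\}$, $\tau\in\mathcal T_a$. Constraints (each read as a Boolean constraint; any satisfiability-preserving CNF translation may be used): (X) for every $i\in[N]$ and $p\in P$: exactly one of $\{x_{i,p,v}: v\in d(p)\}$ is true; (SUTX) for every $i\in[N]$: the formula obtained from $\varphi$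 by replacing every atom $(p=v)$ with $x_{i,p,v}$; (CCX) consisting of (a) for every $i\in[N]$, $\tau\in\mathcal T_a$, $(p,v)\in\tau$: $c^i_\tau\rightarrow (c^{i-1}_\tau\vee x_{i,p,v})$; (b) for every $\tau\in\mathcal T_a$ the unit clause $c^N_\tau$; (c) for every $\tau\in\mathcal T_a$: $c^N_\tau\rightarrow\neg c^0_\tau$. *)

(* Defs.v *)
From mathcomp Require Import all_boot.
Set Implicit Arguments. Unset Strict Implicit. Unset Printing Implicit Defensive.

Inductive form (A : Type) : Type :=
| FAtom of A
| FTrue
| FFalse
| FNot of form A
| FAnd of form A & form A
| FOr of form A & form A
| FImp of form A & form A.
Arguments FTrue {A}.
Arguments FFalse {A}.

Fixpoint feval (A : Type) (s : A -> bool) (f : form A) : bool :=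
  match f with
  | FAtom a => s a
  | FTrue => true
  | FFalse => false
  | FNot g => ~~ feval s g
  | FAnd g h => feval s g && feval s h
  | FOr g h => feval s g || feval s h
  | FImp g h => feval s g ==> feval s h
  end.

Fixpoint fmap (A B : Type) (m : A -> B) (f : form A) : form B :=
  match f with
  | FAtom a => FAtom (m a)
  | FTrue => FTrue
  | FFalse => FFalse
  | FNot g => FNot (fmap m g)
  | FAnd g h => FAnd (fmap m g) (fmap m h)
  | FOr g h => FOr (fmap m g) (fmap m h)
  | FImp g h => FImp (fmap m g) (fmap m h)
  end.

Definition bigAnd (A : Type) (l : seq (form A)) : form A := foldr (@FAnd A) FTrue l.
Definition bigOr (A : Type) (l : seq (form A)) : form A := foldr (@FOr A) FFalse l.

Definition satisfiable (A : Type) (f : form A) : Prop := exists s : A -> bool, feval s f.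

Section SUT.
(* A SUT model: parameters P (finite), domains D p (finite), constraint phi
   whose atoms (p = v) are the pairs Tagged D v : {p : P & D p}. *)
Variables (P : finType) (D : P -> finType).

Definition pval := {p : P & D p}.
Definition assignment := {dffun forall p : P, D p}.

Definition atom_val (A : assignment) (pv : pval) : bool :=
  pv == Tagged D (A (tag pv)).

Definition is_test (phi : form pval) (A : assignment) : bool :=
  feval (atom_val A) phi.

(* a t-tuple: a set of (p, v) pairs with exactly t distinct parameters,
   one value for each *)
Definition is_ttuple (t : nat) (tau : {set pval}) : bool :=
  (#|tau| == t) && (#|[set tag x | x in tau]| == t).

Definition covers (A : assignment) (tau : {set pval}) : bool :=
  [forall x in tau, atom_val A x].

Definition allowed (phi : form pval) (t : nat) (tau : {set pval}) : bool :=
  is_ttuple t tau && [exists A : assignment, is_test phi A && covers A tau].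

Definition is_CA (phi : form pval) (N t : nat) (ca : seq assignment) : Prop :=
  [/\ size ca = N, all (is_test phi) ca &
      forall tau, allowed phi t tau -> has (fun A => covers A tau) ca].

Inductive var : Type :=
| VX of nat & pval
| VC of nat & {set pval}.

Definition allowed_list (phi : form pval) (t : nat) : seq {set pval} :=
  [seq tau <- enum {set pval} | allowed phi t tau].

Definition X_constr (N : nat) : form var :=
  bigAnd [seq bigAnd
            (bigOr [seq FAtom (VX i (Tagged D v)) | v <- enum (D p)]
             :: [seq FNot (FAnd (FAtom (VX i (Tagged D v)))
                                (FAtom (VX i (Tagged D w))))
                | v <- enum (D p), w <- [seq w <- enum (D p) | w != v]])
         | i <- iota 1 N, p <- enum P].

Definition SUTX_constr (phi : form pval) (N : nat) : form var :=
  bigAnd [seq fmap (fun pv => VX i pv) phi | i <- iota 1 N].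

Definition CCX_constr (phi : form pval) (N t : nat) : form var :=
  FAnd
    (bigAnd (flatten (flatten
       [seq [seq [seq FImp (FAtom (VC i tau))
                           (FOr (FAtom (VC i.-1 tau)) (FAtom (VX i pv)))
                 | pv <- enum tau]
            | tau <- allowed_list phi t]
       | i <- iota 1 N])))
    (FAnd
       (bigAnd [seq FAtom (VC N tau) | tau <- allowed_list phi t])
       (bigAnd [seq FImp (FAtom (VC N tau)) (FNot (FAtom (VC 0 tau)))
               | tau <- allowed_list phi t])).

Definition Sat_CCX (phi : form pval) (N t : nat) : form var :=
  FAnd (X_constr N) (FAnd (CCX_constr phi N t) (SUTX_constr phi N)).

End SUT.

(* Main.v *)
Require Import Defs.
From mathcomp Require Import all_boot.

Lemma feval_bigAnd (A : Type) (s : A -> bool) l : feval s (bigAnd l) = all (feval s) l.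
Proof. by elim: l => //= f l ->. Qed.

Lemma feval_bigOr (A : Type) (s : A -> bool) l : feval s (bigOr l) = has (feval s) l.
Proof. by elim: l => //= f l ->. Qed.

Lemma feval_fmap (A B : Type) (m : A -> B) s f : feval s (fmap m f) = feval (fun a => s (m a)) f.
Proof. by elim: f => //= [g -> | g -> h -> | g -> h -> | g -> h ->]. Qed.

Lemma feval_ext (A : Type) (s1 s2 : A -> bool) f : s1 =1 s2 -> feval s1 f = feval s2 f.
Proof. by move=> e; elim: f => //= [g -> | g -> h -> | g -> h -> | g -> h ->]. Qed.

Lemma all_flat (T : Type) (a : pred T) (l : seq (seq T)) : all a (flatten l) = all (all a) l.
Proof. by elim: l => //= x l <-; rewrite all_cat. Qed.

Theorem proposition2 (P : finType) (D : P -> finType)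
  (phi : form (pval D)) (t N : nat) :
  (forall p : P, 0 < #|D p|) ->
  (exists A : assignment D, is_test phi A) ->
  1 <= t <= #|P| ->
  1 <= N ->
  satisfiable (Sat_CCX phi N t) <-> exists ca : seq (assignment D), is_CA phi N t ca.
Proof.
move=> _ [A0 HA0] _ HN; split.
- case=> s; rewrite /Sat_CCX /CCX_constr /X_constr /SUTX_constr /=.
  move=> /andP[HX /andP[/andP[Ha /andP[Hb Hc]] HS]].
  pose Af i : assignment D := [ffun p => odflt (A0 p) [pick v | s (VX i (Tagged D v))]].
  have key : forall i, 1 <= i <= N -> forall p (v : D p),
      s (VX i (Tagged D v)) = (v == Af i p).
    move=> i Hi p v.
    have Hip : i \in iota 1 N by rewrite mem_iota add1n ltnS.
    move: HX; rewrite feval_bigAnd => /all_allpairsP /(_ i p Hip (mem_enum _ _)).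
    rewrite /= feval_bigOr has_map feval_bigAnd => /andP[/hasP[v0 _ Hv0] /all_allpairsP HP].
    rewrite ffunE; case: pickP => [u Hu | Hn] /=; last by move: (Hn v0) Hv0 => /= ->.
    case: (eqVneq v u) => [-> //| Hvu].
    apply/negbTE; apply/negP => Hv.
    have := HP u v (mem_enum _ _); rewrite mem_filter Hvu mem_enum => /(_ erefl) /=.
    by rewrite Hu Hv.
  have Hav : forall i, 1 <= i <= N -> atom_val (Af i) =1 (fun pv => s (VX i pv)).
    move=> i Hi [p v]; rewrite (key i Hi) /atom_val /=.
    by rewrite eq_Tagged.
  exists [seq Af i | i <- iota 1 N]; split.
  + by rewrite size_map size_iota.
  + rewrite all_map; apply/allP => i; rewrite mem_iota add1n ltnS => Hi /=.
    rewrite /is_test (@feval_ext _ _ _ phi (Hav i Hi)).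
    move: HS; rewrite feval_bigAnd all_map => /allP /(_ i).
    rewrite mem_iota add1n ltnS Hi /= => /(_ erefl). by rewrite feval_fmap.
  + move=> tau Htau.
    have Htl : tau \in allowed_list phi t by rewrite mem_filter Htau mem_enum.
    move: Hb; rewrite feval_bigAnd all_map => /allP /(_ tau Htl) /= HcN.
    move: Hc; rewrite feval_bigAnd all_map => /allP /(_ tau Htl) /=; rewrite HcN /= => Hc0.
    have [i /andP[Hi1 HiN] [Hci Hci1]] : exists2 i, 1 <= i <= N & s (VC i tau) /\ ~~ s (VC i.-1 tau).
      have : forall k, k <= N -> s (VC k tau) -> exists2 i, 1 <= i <= k & s (VC i tau) /\ ~~ s (VC i.-1 tau).
        elim=> [|k IH] Hk Hck; first by rewrite Hck in Hc0.
        case Hk': (s (VC k tau)).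
          by case: (IH (ltnW Hk) Hk') => i /andP[H1 H2] H3; exists i => //; rewrite H1 ltnW.
        by exists k.+1 => //=; rewrite Hk'.
      by move=> /(_ N (leqnn N) HcN) [i Hi H]; exists i.
    rewrite has_map; apply/hasP; exists i; first by rewrite mem_iota add1n ltnS Hi1.
    apply/forallP => x; apply/implyP => Hx /=.
    rewrite (Hav i); last by rewrite Hi1.
    have Hiota : i \in iota 1 N by rewrite mem_iota add1n ltnS Hi1.
    move: Ha; rewrite feval_bigAnd all_flat => /all_allpairsP /(_ i tau Hiota Htl).
    rewrite all_map => /allP /(_ x); rewrite mem_enum => /(_ Hx) /=.
    by rewrite Hci (negbTE Hci1).
- case=> ca [Hsz Hall Hcov].
  pose s (x : var D) := match x with
    | VX i pv => atom_val (nth A0 ca i.-1) pv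
    | VC i tau => has (fun A => covers A tau) (take i ca) end.
  exists s; rewrite /Sat_CCX /CCX_constr /X_constr /SUTX_constr /=.
  rewrite !feval_bigAnd; apply/andP; split.
    apply/all_allpairsP => i p _ _ /=.
    rewrite feval_bigOr feval_bigAnd has_map; apply/andP; split.
      apply/hasP; exists (nth A0 ca i.-1 p); first by rewrite mem_enum.
      by rewrite /= /atom_val /=.
    apply/all_allpairsP => v w _; rewrite mem_filter => /andP[Hwv _] /=.
    rewrite /atom_val /= !eq_Tagged /=.
    apply/negP => /andP[/eqP Hv /eqP Hw].
    by rewrite Hv Hw eqxx in Hwv.
  apply/andP; split; last first.
    rewrite all_map; apply/allP => i; rewrite mem_iota add1n ltnS => /andP[Hi1 HiN] /=.
    rewrite feval_fmap.
    have -> : (fun a => s (VX i a)) = atom_val (nth A0 ca i.-1) by [].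
    apply: (allP Hall); apply: mem_nth; rewrite Hsz; case: i Hi1 HiN => //.
  apply/andP; split; last first.
    rewrite !all_map; apply/andP; split; apply/allP => tau; rewrite mem_filter => /andP[Htau _] /=.
      by rewrite -Hsz take_size; apply: Hcov.
    by rewrite take0 /= implybT.
  rewrite all_flat; apply/all_allpairsP => i tau; rewrite mem_iota add1n ltnS => /andP[Hi1 HiN] _.
  rewrite all_map; apply/allP => pv; rewrite mem_enum => Hpv /=.
  apply/implyP; case: i Hi1 HiN => // i _ HiN.
  rewrite (take_nth A0) ?Hsz // has_rcons /= => /orP[/forallP /(_ pv) /implyP /(_ Hpv) -> | ->]; rewrite ?orbT //.

Qed.
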